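(* Let $m\ge2$ and $t\ge1$ be integers, and put $g_+=\gcd(m+1,2^t+1)$, $g_-=\gcd(m+1,2^t-1)$. Then the set of all $a\in\{1,2,\dots,m\}$ satisfying $f_2^t(a)=a$ equals $$\Big\{\tfrac{m+1}{g_+}\,\xi_1:\ \xi_1 \text{ odd},\ 1\le \xi_1<g_+\Big\}\ \cup\ \Big\{\tfrac{m+1}{g_-}\,\xi_2:\ \xi_2 \text{ odd},\ 1\le\xi_2<g_-\Big\}.$$
   Context: For an integer $m\ge2$, $X=\{0,1,\dots,m^2-1\}$, each element written with exactly two base-$m$ digits (leading zeros allowed), and $f(x)=D(x)-A(x)$ is the two-digit base-$m$ Kaprekar map ($D(x)$, $A(x)$: digits of $x$ in nonincreasing, resp. nondecreasing, order). The map $f_2:\{0,1,\dots,m\}\to\{0,1,\dots,m\}$ is defined by $f(a(m-1))=f_2(a)(m-1)$; explicitly $f_2(0)=0$ and $f_2(a)=|2a-m-1|$ for $1\le a\le m$. $f_2^t$ denotes the $t$-fold iterate. *)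

(* Defs.v *)
From mathcomp Require Import all_boot.

(* f_2 : {0,...,m} -> {0,...,m}, f_2(0) = 0, f_2(a) = |2a - m - 1| for 1 <= a <= m.
   Absolute difference of naturals written out in nat. *)
Definition f2 (m a : nat) : nat :=
  if a == 0 then 0
  else if m.+1 <= a.*2 then a.*2 - m.+1 else m.+1 - a.*2.

(* Main.v *)
Require Import Defs.
From mathcomp Require Import all_boot.
From mathcomp Require Import zify.

Definition D (N y : nat) := minn (y %% (2 * N)) (2 * N - y %% (2 * N)).
Definition F (N a : nat) := N - D N (2 * (N - a)).

Lemma mod_lt N y : 0 < N -> y %% (2 * N) < 2 * N.
Proof. move=> H; rewrite ltn_mod; lia. Qed.

Lemma D_le N y : 0 < N -> D N y <= N.
Proof. move=> H; rewrite /D; have := mod_lt N y H; lia. Qed.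

Lemma D_mod N x y : x %% (2 * N) = y %% (2 * N) -> D N x = D N y.
Proof. by rewrite /D => ->. Qed.

Lemma D_small N x : x < 2 * N -> D N x = minn x (2 * N - x).
Proof. by move=> H; rewrite /D modn_small. Qed.

Lemma D_sym N x y : 0 < N -> (x + y) %% (2 * N) = 0 -> D N x = D N y.
Proof.
move=> H Hxy.
have Hr := mod_lt N x H; have Hs := mod_lt N y H.
rewrite -modnDm in Hxy.
rewrite /D.
set r := x %% (2 * N) in Hr Hxy *; set s := y %% (2 * N) in Hs Hxy *.
have [Hlt|Hge] := ltnP (r + s) (2 * N).
  rewrite modn_small // in Hxy; lia.
have E : r + s = 1 * (2 * N) + (r + s - 2 * N) by lia.
rewrite E modnMDl modn_small in Hxy; lia.
Qed.

Lemma D_double N y : 0 < N -> D N (2 * D N y) = D N (2 * y).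
Proof.
move=> H.
have Hr := mod_lt N y H.
have [Hle|Hgt] := leqP (y %% (2 * N)) N.
  have -> : D N y = y %% (2 * N) by rewrite /D; apply/minn_idPl; lia.
  apply: D_mod. by rewrite modnMmr.
have -> : D N y = 2 * N - y %% (2 * N) by rewrite /D; apply/minn_idPr; lia.
transitivity (D N (2 * (y %% (2 * N)))).
  apply: D_sym => //.
  have -> : 2 * (2 * N - y %% (2 * N)) + 2 * (y %% (2 * N)) = 2 * (2 * N) by lia.
  by rewrite modnMl.
apply: D_mod. by rewrite modnMmr.
Qed.

Lemma iterF N a k : 0 < N -> a <= N -> iter k (F N) a = N - D N (2 ^ k * (N - a)).
Proof.
move=> H Ha; elim: k => [|k IH].
  rewrite /= mul1n D_small; lia.
rewrite iterS IH /F.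
have Hd := D_le N (2 ^ k * (N - a)) H.
have -> : N - (N - D N (2 ^ k * (N - a))) = D N (2 ^ k * (N - a)) by lia.
by rewrite D_double // expnS mulnA.
Qed.

Lemma f2F m a : 1 <= a <= m -> f2 m a = F m.+1 a /\ f2 m a <= m.
Proof.
move=> /andP [H1 H2].
rewrite /F D_small; last lia.
rewrite /f2; have -> : (a == 0) = false by lia.
case: ifP => h; split; lia.
Qed.

Lemma F0 m : F m.+1 0 = m.+1.
Proof. by rewrite /F /D subn0 modnn. Qed.

Lemma FN m : F m.+1 m.+1 = m.+1.
Proof. by rewrite /F /D subnn muln0 mod0n. Qed.

Lemma f2_0 m : f2 m 0 = 0.
Proof. by []. Qed.

Lemma traj m a k : 1 <= a <= m ->
  (iter k (f2 m) a = iter k (F m.+1) a /\ 1 <= iter k (F m.+1) a <= m) \/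
  (iter k (f2 m) a = 0 /\ (iter k (F m.+1) a = 0 \/ iter k (F m.+1) a = m.+1)).
Proof.
move=> Ha; elim: k => [|k [[E R]|[E [R|R]]]]; first by left.
- rewrite !iterS E; have [h1 h2] := f2F m _ R.
  case: (posnP (f2 m (iter k (F m.+1) a))) => h.
    right; split => //; left; by rewrite -h1.
  left; rewrite -h1; split => //; lia.
- by right; rewrite !iterS E R F0; split => //; right.
- by right; rewrite !iterS E R FN; split => //; right.
Qed.

Lemma fix_equiv m a t : 1 <= a <= m ->
  (iter t (f2 m) a = a) <-> (D m.+1 (2 ^ t * (m.+1 - a)) = m.+1 - a).
Proof.
move=> Ha.
have HF : iter t (F m.+1) a = a <-> D m.+1 (2 ^ t * (m.+1 - a)) = m.+1 - a.
  rewrite iterF //; last lia.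
  have := D_le m.+1 (2 ^ t * (m.+1 - a)) (ltn0Sn m).
  split; lia.
rewrite -HF.
case: (traj m a t Ha) => [[E R]|[E R]]; rewrite E //.
split; lia.
Qed.

Lemma D_fix N p b : 0 < p -> 0 < b < N ->
  D N (p * b) = b <-> (2 * N %| (p - 1) * b) \/ (2 * N %| (p + 1) * b).
Proof.
move=> Hp Hb.
have HN : 0 < N by lia.
have Hr := mod_lt N (p * b) HN.
rewrite mulnBl mulnDl mul1n -eqn_mod_dvd; last by rewrite leq_pmull.
rewrite /dvdn.
rewrite [b %% _]modn_small; last lia.
rewrite -modnDml.
set r := (p * b) %% (2 * N) in Hr *.
rewrite /D -/r.
split.
  move=> h. case: (leqP r (2 * N - r)) => c.
    left; apply/eqP; lia.
  right; have -> : r + b = 2 * N by lia. by rewrite modnn.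
case=> [/eqP h|h].
  lia.
have [Hlt|Hge] := ltnP (r + b) (2 * N).
  rewrite modn_small // in h; lia.
have E : r + b = 1 * (2 * N) + (r + b - 2 * N) by lia.
rewrite E modnMDl modn_small in h; lia.
Qed.

Lemma charac m c a : odd c ->
  (1 <= a <= m /\ 2 * m.+1 %| c * (m.+1 - a)) <->
  (exists xi, odd xi /\ 1 <= xi < gcdn m.+1 c /\ a = (m.+1 %/ gcdn m.+1 c) * xi).
Proof.
move=> hc.
set N := m.+1; set g := gcdn N c.
have gpos : 0 < g by rewrite gcdn_gt0.
set q := N %/ g.
have HN : N = q * g by rewrite divnK // dvdn_gcdl.
have Hc : c = c %/ g * g by rewrite divnK // dvdn_gcdr.
set c' := c %/ g in Hc.
have qpos : 0 < q by lia.
have cop : coprime q c'.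
  rewrite /coprime -(eqn_pmul2r gpos) mul1n muln_gcdl -HN -Hc.
  by [].
have oc' : odd c' by move: hc; rewrite Hc oddM => /andP[].
have og : odd g by move: hc; rewrite Hc oddM => /andP[].
have key : (2 * N %| c * (N - a)) = (2 * q %| N - a).
  have -> : 2 * N = (2 * q) * g by rewrite HN mulnA.
  have -> : c * (N - a) = (c' * (N - a)) * g by rewrite Hc mulnAC.
  rewrite dvdn_pmul2r // Gauss_dvdr //.
  by rewrite coprimeMl coprime2n oc' cop.
rewrite key; split.
  move=> [/andP[h1 h2] hd].
  have qa : q %| a.
    have hd' : q %| N - a by apply: dvdn_trans hd; apply: dvdn_mull.
    rewrite dvdn_subr in hd'; first by [].
      lia.
    by rewrite HN dvdn_mulr.
  have Ea : a = q * (a %/ q) by rewrite mulnC divnK.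
  exists (a %/ q).
  set xi := a %/ q in Ea *.
  have lt : xi < g by rewrite -(ltn_pmul2l qpos) -Ea -HN /N ltnS.
  have E2 : N - a = q * (g - xi) by rewrite mulnBr -HN -Ea.
  rewrite E2 [2 * q]mulnC dvdn_pmul2l // in hd.
  split.
    move: hd; rewrite dvdn2 oddB; last exact: ltnW.
    by rewrite og; case: (odd xi).
  have : 0 < q * xi by rewrite -Ea.
  rewrite muln_gt0 => /andP[_ x1].
  by split => //; apply/andP; split.
move=> [xi [oxi [/andP[h1 h2] ->]]].
have -> : N - q * xi = q * (g - xi) by rewrite mulnBr -HN.
rewrite [2 * q]mulnC dvdn_pmul2l // dvdn2 oddB; last exact: ltnW.
rewrite og oxi; split => //.
have h3 : q * xi < q * g by rewrite ltn_pmul2l.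
have h4 : 0 < q * xi by rewrite muln_gt0 qpos.
by rewrite -HN in h3; rewrite h4 -ltnS.
Qed.

Theorem theorem3p3p2 (m t : nat) (hm : 2 <= m) (ht : 1 <= t) (a : nat) :
  let gp := gcdn m.+1 (2 ^ t).+1 in
  let gm := gcdn m.+1 (2 ^ t).-1 in
  (1 <= a <= m /\ iter t (f2 m) a = a) <->
  ((exists xi1 : nat, odd xi1 /\ 1 <= xi1 < gp /\ a = (m.+1 %/ gp) * xi1) \/
   (exists xi2 : nat, odd xi2 /\ 1 <= xi2 < gm /\ a = (m.+1 %/ gm) * xi2)).
Proof.
move=> gp gm; rewrite /gp /gm; clear gp gm.
have pp : 0 < 2 ^ t by rewrite expn_gt0.
have ev : odd (2 ^ t) = false by rewrite oddX; move: ht; case: (t) => // n _ /=.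
have op : odd (2 ^ t).+1 by rewrite /= ev.
have om : odd (2 ^ t).-1.
  by move: ev; rewrite -[in odd (2 ^ t)](prednK pp) /=; case: (odd _).
rewrite -(charac _ _ _ op) -(charac _ _ _ om).
have e1 : (2 ^ t).-1 = 2 ^ t - 1 by rewrite subn1.
have e2 : (2 ^ t).+1 = 2 ^ t + 1 by rewrite addn1.
rewrite e1 e2.
have D' : forall a, 1 <= a <= m ->
  (iter t (f2 m) a = a) <-> (2 * m.+1 %| (2 ^ t - 1) * (m.+1 - a)) \/ (2 * m.+1 %| (2 ^ t + 1) * (m.+1 - a)).
  move=> x Hx; rewrite (fix_equiv m x t Hx); apply: D_fix => //; lia.
split.
  move=> [Ha Hi]; case: ((D' a Ha).1 Hi) => h; [right|left]; by split.
case=> [[Ha H]|[Ha H]]; split => //; apply/(D' a Ha); [right|left]; exact H.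
Qed.
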